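(* Let $f(x)=\sum_{i=1}^s\phi_i({\bm M}_ix)$ for $x\in\mathbb{R}^d$, where ${\bm M}_i\in\mathbb{R}^{q_i\times d}$ and each $\phi_i:\mathbb{R}^{q_i}\to\mathbb{R}$ is continuously differentiable with ${\bm L}_i$-Lipschitz gradient, ${\bm L}_i\in\mathbb{S}^{q_i}_{++}$. If ${\bm L}\in\mathbb{S}^d_{++}$ satisfies $$\sum_{i=1}^s\lambda_{\max}\!\left({\bm L}_i^{1/2}{\bm M}_i{\bm L}^{-1}{\bm M}_i^\top{\bm L}_i^{1/2}\right)=1,$$ then $f$ has ${\bm L}$-Lipschitz gradient.
   Context: $\mathbb{S}^q_{++}$: symmetric positive definite $q\times q$ matrices; $\|x\|_{\bm M}^2:=x^\top{\bm M}x$; $\lambda_{\max}$: largest eigenvalue. A differentiable $g:\mathbb{R}^q\to\mathbb{R}$ has ${\bm L}$-Lipschitz gradient if $\|\nabla g(x)-\nabla g(y)\|_{{\bm L}^{-1}}\le\|x-y\|_{\bm L}$ for all $x,y$. *)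

(* Defs.v *)
From HB Require Import structures.
From mathcomp Require Import all_boot all_order all_algebra.
From mathcomp Require Import all_classical all_reals all_analysis.
Set Implicit Arguments. Unset Strict Implicit. Unset Printing Implicit Defensive.
Import Order.TTheory GRing.Theory Num.Theory.
Import numFieldNormedType.Exports.
Local Open Scope ring_scope.
Local Open Scope classical_set_scope.

Section Defs.
Variable R : realType.

Definition qform (n : nat) (A : 'M[R]_n) (x : 'cV[R]_n) : R :=
  ((x^T *m A *m x) 0 0).

Definition mxnorm (n : nat) (A : 'M[R]_n) (x : 'cV[R]_n) : R :=
  Num.sqrt (qform A x).

Definition spd (n : nat) (A : 'M[R]_n) : Prop :=
  A^T = A /\ forall x : 'cV[R]_n, x != 0 -> 0 < qform A x.

Definition is_gradient (q : nat) (phi : 'cV[R]_q -> R) (g : 'cV[R]_q -> 'cV[R]_q)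
  : Prop :=
  forall x, differentiable phi x /\
    ('d phi x : 'cV[R]_q -> R) = (fun v => ((g x)^T *m v) 0 0).

Definition L_lipschitz_gradient (q : nat) (L : 'M[R]_q) (phi : 'cV[R]_q -> R)
  : Prop :=
  exists g : 'cV[R]_q -> 'cV[R]_q, is_gradient phi g /\
    forall x y, mxnorm (invmx L) (g x - g y) <= mxnorm L (x - y).

Definition C1 (q : nat) (phi : 'cV[R]_q -> R) : Prop :=
  exists g : 'cV[R]_q -> 'cV[R]_q, is_gradient phi g /\ continuous g.

(* largest eigenvalue (used for symmetric matrices, whose eigenvalues are real) *)
Definition lambda_max (n : nat) (A : 'M[R]_n) : R :=
  sup [set a : R | eigenvalue A a].

End Defs.

(* Main.v *)
Require Import Defs.
From HB Require Import structures.
From mathcomp Require Import all_boot all_order all_algebra.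
From mathcomp Require Import all_classical all_reals all_analysis.
From mathcomp Require Import ring lra.
Import Order.TTheory GRing.Theory Num.Theory.
Import numFieldNormedType.Exports.
Local Open Scope ring_scope.

Module Aux.
Set Implicit Arguments. Unset Strict Implicit. Unset Printing Implicit Defensive.

Section Alg.
Variable R : realType.

Definition bil (n : nat) (A : 'M[R]_n) (x y : 'cV[R]_n) : R := (x^T *m A *m y) 0 0.
Definition dotc (n : nat) (x y : 'cV[R]_n) : R := (x^T *m y) 0 0.

Lemma qformE n (A : 'M[R]_n) x : qform A x = bil A x x. Proof. by []. Qed.
Lemma dotcE n (x y : 'cV[R]_n) : dotc x y = bil 1%:M x y.
Proof. by rewrite /bil mulmx1. Qed.

Lemma bilDl n (A : 'M[R]_n) x y z : bil A (x + y) z = bil A x z + bil A y z.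
Proof. by rewrite /bil linearD /= !mulmxDl mxE. Qed.
Lemma bilDr n (A : 'M[R]_n) x y z : bil A z (x + y) = bil A z x + bil A z y.
Proof. by rewrite /bil !mulmxDr mxE. Qed.
Lemma bilZl n (A : 'M[R]_n) a x z : bil A (a *: x) z = a * bil A x z.
Proof. by rewrite /bil linearZ /= -!scalemxAl mxE. Qed.
Lemma bilZr n (A : 'M[R]_n) a x z : bil A z (a *: x) = a * bil A z x.
Proof. by rewrite /bil -!scalemxAr mxE. Qed.
Lemma bilNl n (A : 'M[R]_n) x z : bil A (- x) z = - bil A x z.
Proof. by rewrite -scaleN1r bilZl mulN1r. Qed.
Lemma bilNr n (A : 'M[R]_n) x z : bil A z (- x) = - bil A z x.
Proof. by rewrite -scaleN1r bilZr mulN1r. Qed.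
Lemma bilBl n (A : 'M[R]_n) x y z : bil A (x - y) z = bil A x z - bil A y z.
Proof. by rewrite bilDl bilNl. Qed.
Lemma bilBr n (A : 'M[R]_n) x y z : bil A z (x - y) = bil A z x - bil A z y.
Proof. by rewrite bilDr bilNr. Qed.
Lemma bil0l n (A : 'M[R]_n) z : bil A 0 z = 0.
Proof. by rewrite /bil linear0 !mul0mx mxE. Qed.
Lemma bil0r n (A : 'M[R]_n) z : bil A z 0 = 0.
Proof. by rewrite /bil mulmx0 mxE. Qed.

Lemma bilT n (A : 'M[R]_n) x y : bil A x y = bil A^T y x.
Proof.
rewrite /bil.
have E : forall B : 'M[R]_1, B 0 0 = B^T 0 0 by move=> B; rewrite mxE.
by rewrite E !trmx_mul trmxK mulmxA.
Qed.

Lemma bil_sym n (A : 'M[R]_n) x y : A^T = A -> bil A x y = bil A y x.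
Proof. by move=> sA; rewrite bilT sA. Qed.

Lemma bil_suml n (A : 'M[R]_n) (I : finType) (v : I -> 'cV[R]_n) z :
  bil A (\sum_i v i) z = \sum_i bil A (v i) z.
Proof.
elim/big_rec2: _ => [|i y1 y2 _ h]; first exact: bil0l.
by rewrite bilDl h.
Qed.

Lemma dotc_sqr n (x : 'cV[R]_n) : dotc x x = \sum_i x i 0 ^+ 2.
Proof. by rewrite /dotc mxE; apply: eq_bigr => i _; rewrite mxE expr2. Qed.

Lemma dotc_ge0 n (x : 'cV[R]_n) : 0 <= dotc x x.
Proof. by rewrite dotc_sqr sumr_ge0 // => i _; rewrite sqr_ge0. Qed.

Lemma dotc_eq0 n (x : 'cV[R]_n) : dotc x x = 0 -> x = 0.
Proof.
rewrite dotc_sqr => /psumr_eq0P H; apply/matrixP => i j.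
rewrite (ord1 j) mxE; apply/eqP; rewrite -sqrf_eq0; apply/eqP.
by apply: H => // k _; rewrite sqr_ge0.
Qed.

Lemma dotc_gt0 n (x : 'cV[R]_n) : x != 0 -> 0 < dotc x x.
Proof.
move=> x0; rewrite lt_neqAle dotc_ge0 andbT eq_sym.
by apply/negP => /eqP /dotc_eq0 H; rewrite H eqxx in x0.
Qed.

Definition psd n (A : 'M[R]_n) := forall x, 0 <= qform A x.

Lemma qform_expand n (A : 'M[R]_n) x y t : A^T = A ->
  qform A (x + t *: y) = qform A x + 2 * t * bil A x y + t ^+ 2 * qform A y.
Proof.
move=> sA; rewrite !qformE bilDl !bilDr !bilZl !bilZr (bil_sym x y sA).
by rewrite expr2; ring.
Qed.

Lemma CS n (A : 'M[R]_n) x y : A^T = A -> psd A ->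
  bil A x y ^+ 2 <= qform A x * qform A y.
Proof.
move=> sA pA.
set a := qform A x; set b := bil A x y; set c := qform A y.
have H t : 0 <= a + 2 * t * b + t ^+ 2 * c.
  by rewrite -qform_expand //; apply: pA.
have c0 : 0 <= c by apply: pA.
have a0 : 0 <= a by apply: pA.
have [c00|cpn] := eqVneq c 0.
  have b0 : b = 0.
    apply/eqP; apply/negP => /negP bn0.
    have := H (- (a + 1) / (2 * b)); rewrite c00 mulr0 addr0.
    have -> : 2 * (- (a + 1) / (2 * b)) * b = - (a + 1).
      by field.
    lra.
  by rewrite b0 c00 expr0n /= mulr0.
have cp : 0 < c by rewrite lt_neqAle eq_sym cpn c0.
have := H (- b / c).
have -> : a + 2 * (- b / c) * b + (- b / c) ^+ 2 * c = (a * c - b ^+ 2) / c.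
  by field.
rewrite pmulr_lge0 ?invr_gt0 // subr_ge0 => h; exact: h.
Qed.

Lemma mxnorm_ge0 n (A : 'M[R]_n) x : 0 <= mxnorm A x.
Proof. exact: sqrtr_ge0. Qed.

Lemma bil_le_norm n (A : 'M[R]_n) x y : A^T = A -> psd A ->
  bil A x y <= mxnorm A x * mxnorm A y.
Proof.
move=> sA pA; rewrite /mxnorm -sqrtrM; last exact: pA.
apply: (le_trans (ler_norm _)); rewrite -sqrtr_sqr ler_sqrt.
  exact: CS.
by rewrite mulr_ge0 //; apply: pA.
Qed.

Lemma mxnorm_triangle n (A : 'M[R]_n) x y : A^T = A -> psd A ->
  mxnorm A (x + y) <= mxnorm A x + mxnorm A y.
Proof.
move=> sA pA.
have h := bil_le_norm x y sA pA.
have hx := mxnorm_ge0 A x; have hy := mxnorm_ge0 A y.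
rewrite -[mxnorm A x + mxnorm A y]ger0_norm ?addr_ge0 //.
rewrite -sqrtr_sqr {1}/mxnorm ler_sqrt ?sqr_ge0 //.
have -> : x + y = x + 1 *: y by rewrite scale1r.
rewrite qform_expand // sqrrD !sqr_sqrtr ?(pA x) ?(pA y) //.
rewrite expr1n !mul1r.
have -> : qform A x = mxnorm A x ^+ 2 by rewrite sqr_sqrtr //; apply: pA.
have -> : qform A y = mxnorm A y ^+ 2 by rewrite sqr_sqrtr //; apply: pA.
rewrite mulr2n; nra.
Qed.

Lemma mxnorm_sum n (A : 'M[R]_n) (I : finType) (v : I -> 'cV[R]_n) : A^T = A -> psd A ->
  mxnorm A (\sum_i v i) <= \sum_i mxnorm A (v i).
Proof.
move=> sA pA.
elim/big_rec2: _ => [|i y1 y2 _ h].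
  by rewrite /mxnorm qformE bil0l sqrtr0.
by apply: (le_trans (mxnorm_triangle _ _ sA pA)); rewrite lerD2l.
Qed.

End Alg.

Section Ray.
Variable R : realType.
Local Open Scope classical_set_scope.

Lemma cont_sum (T : topologicalType) (I : finType) (F : I -> T -> R) :
  (forall i, continuous (F i)) -> continuous (fun x => \sum_i F i x).
Proof.
move=> cF; rewrite -fct_sumE.
elim/big_ind: _ => //; first exact: cst_continuous.
by move=> f g cf cg x; apply: continuousD; [exact: cf|exact: cg].
Qed.

Lemma cont_quad n (B : 'M[R]_n) :
  continuous (fun r : 'rV[R]_n => (r *m B *m r^T) 0 0).
Proof.
have -> : (fun r : 'rV[R]_n => (r *m B *m r^T) 0 0) =
  (fun r => \sum_j (\sum_i r 0 i * B i j) * r 0 j).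
  by apply/funext => r; rewrite mxE; apply: eq_bigr => j _; rewrite !mxE.
apply: cont_sum => j x; apply: continuousM; last exact: coord_continuous.
move: x; apply: cont_sum => i x; apply: continuousM; first exact: coord_continuous.
exact: cst_continuous.
Qed.

Lemma quad0 (p q : R) : (forall t, 2 * t * p + t ^+ 2 * q <= 0) -> p = 0.
Proof.
move=> H; apply/eqP; apply/negP => /negP p0.
set e := (`|q| + 1)^-1.
have e0 : 0 < e by rewrite invr_gt0 ltr_wpDl.
have he : e * (`|q| + 1) = 1 by rewrite mulVf // gt_eqF // ltr_wpDl.
have hq : - `|q| <= q by rewrite lerNnormlW.
have eq1 : e - 1 <= e * q by nra.
have p2 : 0 < p ^+ 2 by rewrite exprn_even_gt0.
have := H (p * e).
have -> : 2 * (p * e) * p + (p * e) ^+ 2 * q = p ^+ 2 * e * (2 + e * q) by ring.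
have : 0 < p ^+ 2 * e by rewrite mulr_gt0.
nra.
Qed.

Lemma rayleigh n (A : 'M[R]_n.+1) : A^T = A ->
  exists x : 'cV[R]_n.+1, [/\ dotc x x = 1,
    (forall v, qform A v <= qform A x * dotc v v) &
    A *m x = qform A x *: x].
Proof.
move=> sA.
pose S := [set r : 'rV[R]_n.+1 | (r *m 1%:M *m r^T) 0 0 = 1].
pose f := fun r : 'rV[R]_n.+1 => (r *m A *m r^T) 0 0.
have S0 : S !=set0.
  exists (delta_mx 0 0); rewrite /S /= mulmx1 trmx_delta mul_delta_mx mxE.
  by rewrite !eqxx.
have cS : compact S.
  apply: bounded_closed_compact.
    exists 1; split => // M M1 r /= Sr; apply: le_trans (ltW M1).
    rewrite /Num.norm /= mx_normrE; apply: bigmax_le => //= -[i j] _ /=.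
    rewrite (ord1 i).
    have hs : \sum_k r 0 k * r 0 k = 1.
      by rewrite -Sr mulmx1 mxE; apply: eq_bigr => k _; rewrite mxE.
    have h2 : r 0 j ^+ 2 <= 1.
      rewrite -hs (bigD1 j) //= expr2 lerDl; apply: sumr_ge0 => k _.
      by rewrite -expr2 sqr_ge0.
    have : `|r 0 j| ^+ 2 <= 1 by rewrite real_normK ?num_real.
    have := normr_ge0 (r 0 j); nra.
  apply: (@preimage_closed _ _ (fun r : 'rV[R]_n.+1 => (r *m 1%:M *m r^T) 0 0)
     [set x | x = 1]); last exact: closed_eq.
  by move=> x _; apply: cont_quad.
have cf : {within S, continuous f} by apply: continuous_subspaceT; apply: cont_quad.
have [c cS' cmax] := EVT_max_rV S0 cS cf.
set x := c^T.
have hx1 : dotc x x = 1.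
  by move: cS'; rewrite inE /S /= mulmx1 /dotc /x trmxK.
have fx : forall v, f v^T = qform A v by move=> v; rewrite /f /qform trmxK.
have fc : qform A x = f c by rewrite -fx /x trmxK.
have sI : (1%:M : 'M[R]_n.+1)^T = 1%:M by rewrite trmx1.
have C1 : forall v, qform A v <= qform A x * dotc v v.
  move=> v; have [->|v0] := eqVneq v 0.
    by rewrite qformE bil0l dotcE bil0l mulr0.
  set d := dotc v v; have d0 : 0 < d := dotc_gt0 v0.
  set k := (Num.sqrt d)^-1.
  have k2 : k ^+ 2 * d = 1.
    by rewrite /k exprVn sqr_sqrtr ?ltW // mulVf ?gt_eqF.
  have Sr : (k *: v)^T \in S.
    rewrite inE /S /= mulmx1 trmxK; change (dotc (k *: v) (k *: v) = 1).
    by rewrite !dotcE bilZl bilZr -dotcE -/d mulrA -expr2.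
  have := cmax _ Sr; rewrite fx -fc qformE bilZl bilZr mulrA -expr2 -qformE.
  move=> h; have : 0 <= d * (qform A x - k ^+ 2 * qform A v).
    by apply: mulr_ge0; [exact: ltW | rewrite subr_ge0].
  have -> : d * (qform A x - k ^+ 2 * qform A v) = qform A x * d - (k ^+ 2 * d) * qform A v by ring.
  by rewrite k2 mul1r subr_ge0.
have C2 : forall y, bil A x y = qform A x * dotc x y.
  move=> y; apply/eqP; rewrite -subr_eq0; apply/eqP.
  apply: (@quad0 _ (qform A y - qform A x * dotc y y)) => t.
  have := C1 (x + t *: y).
  rewrite qform_expand // dotcE -(qformE 1%:M (x + t *: y)) qform_expand //.
  rewrite !qformE -!dotcE hx1 -!qformE.
  move=> h; nra.
set mu := qform A x.
exists x; split => //.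
set w := A *m x - mu *: x.
have hw : dotc w w = 0.
  have e1 : dotc w w = dotc w (A *m x) - mu * dotc w x.
    by rewrite /w {1}dotcE bilBr bilZr -!dotcE.
  have e2 : dotc w (A *m x) = bil A w x by rewrite /dotc /bil mulmxA.
  have e3 : dotc w x = dotc x w by rewrite !dotcE bil_sym.
  by rewrite e1 e2 bil_sym // C2 e3 -/mu subrr.
by apply/eqP; rewrite -subr_eq0; apply/eqP; apply: dotc_eq0.
Qed.

Lemma lambda_maxP n (A : 'M[R]_n) : A^T = A ->
  (forall v, qform A v <= lambda_max A * dotc v v) /\ (psd A -> 0 <= lambda_max A).
Proof.
case: n A => [|n] A sA.
  have E : [set a | eigenvalue A a] = set0.
    apply/seteqP; split=> a //= /eigenvalueP [v _].
    by rewrite (thinmx0 v) eqxx.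
  rewrite /lambda_max E sup0; split => // v.
  by rewrite (flatmx0 v) qformE bil0l mul0r.
have [x [hx1 C1 hAx]] := rayleigh sA.
set mu := qform A x in C1 hAx.
have eigx : eigenvalue A mu.
  apply/eigenvalueP; exists x^T.
    by rewrite -{1}sA -trmx_mul hAx linearZ.
  apply/negP => /eqP x0.
  have : x = 0 by rewrite -(trmxK x) x0 linear0.
  by move=> xz; move: hx1; rewrite xz dotcE bil0l => /eqP; rewrite eq_sym oner_eq0.
have ub : ubound [set a | eigenvalue A a] mu.
  move=> a /= /eigenvalueP [v hv v0].
  set w := v^T.
  have w0 : w != 0 by apply/negP => /eqP h; move: v0; rewrite -(trmxK v) -/w h linear0 eqxx.
  have hAw : A *m w = a *: w by rewrite /w -{1}sA -trmx_mul hv linearZ.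
  have hq : qform A w = a * dotc w w.
    by rewrite /qform -mulmxA hAw -scalemxAr mxE.
  have := C1 w; rewrite hq ler_pM2r //; exact: dotc_gt0.
have lm : lambda_max A = mu.
  apply/eqP; rewrite eq_le; apply/andP; split.
    by apply: ge_sup => //; exists mu.
  by apply: ub_le_sup => //; exists mu.
rewrite lm; split => // pA; exact: pA.
Qed.

End Ray.

Section Term.
Variable R : realType.

Lemma qform_mul m n (B : 'M[R]_m) (C : 'M[R]_(m, n)) w :
  qform B (C *m w) = qform (C^T *m B *m C) w.
Proof. by rewrite /qform trmx_mul !mulmxA. Qed.

Lemma spd_psd n (A : 'M[R]_n) : spd A -> psd A.
Proof.
move=> [_ pA] x; have [->|x0] := eqVneq x 0.
  by rewrite qformE bil0l.
exact/ltW/pA.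
Qed.

Lemma spd_unit n (A : 'M[R]_n) : spd A -> A \in unitmx.
Proof.
move=> [sA pA]; rewrite unitmxE unitfE; apply/negP => /det0P [v v0 hv].
have x0 : v^T != 0.
  by apply/negP => /eqP h; move: v0; rewrite -(trmxK v) h linear0 eqxx.
have := pA _ x0.
have -> : qform A v^T = 0.
  by rewrite /qform -mulmxA -{1}sA -trmx_mul hv linear0 mulmx0 mxE.
by rewrite ltxx.
Qed.

Lemma spd_inv n (A : 'M[R]_n) : spd A -> spd (invmx A).
Proof.
move=> hA; have uA := spd_unit hA; case: hA => sA pA.
split; first by rewrite trmx_inv sA.
move=> x x0; set y := invmx A *m x.
have xy : x = A *m y by rewrite /y mulKVmx.
have y0 : y != 0 by apply/negP => /eqP h; move: x0; rewrite xy h mulmx0 eqxx.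
rewrite xy qform_mul sA -!mulmxA mulVmx // mulmx1; exact: pA.
Qed.

Lemma term_bound q d (S Li : 'M[R]_q) (M : 'M[R]_(q, d)) (L : 'M[R]_d)
  (D : 'cV[R]_q) (u : 'cV[R]_d) :
  spd S -> S *m S = Li -> spd L ->
  mxnorm (invmx Li) D <= mxnorm Li (M *m u) ->
  mxnorm (invmx L) (M^T *m D) <=
    lambda_max (S *m M *m invmx L *m M^T *m S) * mxnorm L u.
Proof.
move=> hS hLi hL hD.
have uS := spd_unit hS; have uL := spd_unit hL.
have [sS _] := hS; have [sL _] := hL.
have hL' := spd_inv hL; have [sL' _] := hL'.
have pL' := spd_psd hL'.
set L' := invmx L.
have {}sL' : L'^T = L' by rewrite /L' trmx_inv sL.
set A := S *m M *m L' *m M^T *m S.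
have AE : A = (M^T *m S)^T *m L' *m (M^T *m S).
  by rewrite trmx_mul !trmxK sS /A !mulmxA.
have sA : A^T = A by rewrite AE !trmx_mul !trmxK sL' !mulmxA.
have qA : forall w, qform A w = qform L' (M^T *m S *m w).
  by move=> w; rewrite qform_mul -AE.
have pA : psd A by move=> w; rewrite qA; exact: pL'.
have [Ray lam0] := lambda_maxP sA.
have {}lam0 := lam0 pA.
set lam := lambda_max A in Ray lam0 *.
have uSS : S *m S \in unitmx by rewrite unitmx_mul uS.
have SXS : S^T *m invmx Li *m S = 1%:M.
  rewrite sS -hLi; set X := S *m invmx (S *m S) *m S.
  apply: (can_inj (mulKmx uS)); rewrite mulmx1 /X !mulmxA mulmxV // mul1mx //.
have st3 : qform L' (M^T *m D) <= lam * qform (invmx Li) D.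
  set v := invmx S *m D.
  have Dv : D = S *m v by rewrite /v mulKVmx.
  rewrite Dv (qform_mul (invmx Li) S) SXS mulmxA -qA.
  by have := Ray v; rewrite (qformE 1%:M) -dotcE.
have st2 : qform Li (M *m u) <= lam * qform L u.
  set w := S *m (M *m u).
  have e1 : qform Li (M *m u) = dotc w w.
    by rewrite dotcE -qformE (qform_mul 1%:M S) mulmx1 sS hLi.
  set z := M^T *m S *m w.
  have e2 : bil L' z (L *m u) = dotc w w.
    rewrite /bil /L' mulmxA -(mulmxA z^T) mulVmx // mulmx1 /z !trmx_mul !trmxK sS.
    by rewrite /dotc /w !trmx_mul sS !mulmxA.
  have e3 : qform L' (L *m u) = qform L u.
    by rewrite qform_mul sL /L' mulmxV // mul1mx.
  have cs := CS z (L *m u) sL' pL'.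
  rewrite e2 e3 -qA in cs.
  have r1 := Ray w.
  have Q0 : 0 <= qform L u by exact: spd_psd.
  have D0 := dotc_ge0 w.
  have h1 : dotc w w ^+ 2 <= lam * dotc w w * qform L u.
    apply: (le_trans cs); rewrite -mulrA [_ * qform L u]mulrC mulrA.
    by rewrite mulrC; apply: ler_wpM2r.
  rewrite e1; have [Dz|Dp] := eqVneq (dotc w w) 0.
    by rewrite Dz mulr_ge0.
  have Dp' : 0 < dotc w w by rewrite lt_neqAle eq_sym Dp D0.
  rewrite expr2 in h1; nra.
have Q0 : 0 <= qform L u by exact: spd_psd.
have hLis : spd Li.
  split; first by rewrite -hLi trmx_mul sS.
  move=> x x0; have -> : qform Li x = dotc (S *m x) (S *m x).
    by rewrite dotcE -qformE (qform_mul 1%:M S) mulmx1 sS hLi.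
  apply: dotc_gt0; apply/negP => /eqP h; move: x0.
  by rewrite -(mulKmx uS x) h mulmx0 eqxx.
have Li0 : 0 <= qform (invmx Li) D by apply: spd_psd; apply: spd_inv.
have h4 : mxnorm Li (M *m u) <= Num.sqrt lam * mxnorm L u.
  by rewrite /mxnorm -sqrtrM // ler_sqrt ?mulr_ge0.
apply: (@le_trans _ _ (Num.sqrt lam * mxnorm (invmx Li) D)).
  by rewrite /mxnorm -sqrtrM // ler_sqrt ?mulr_ge0.
apply: (@le_trans _ _ (Num.sqrt lam * mxnorm Li (M *m u))).
  by apply: ler_wpM2l; [exact: sqrtr_ge0|].
apply: (@le_trans _ _ (Num.sqrt lam * (Num.sqrt lam * mxnorm L u))).
  by apply: ler_wpM2l; [exact: sqrtr_ge0|].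
by rewrite mulrA -expr2 sqr_sqrtr.
Qed.

End Term.

Section Diff.
Variable R : realType.

Lemma entry_le_norm m n (x : 'M[R]_(m, n)) i j : `|x i j| <= `|x|.
Proof.
rewrite /Num.norm /= mx_normrE.
exact: (le_bigmax _ (fun ij : 'I_m * 'I_n => `|x ij.1 ij.2|) (i, j)).
Qed.

Lemma mulmx_continuous q d (M : 'M[R]_(q, d)) :
  continuous (mulmx M : 'cV[R]_d -> 'cV[R]_q).
Proof.
apply: bounded_linear_continuous; apply/bounded_funP => r.
exists (\sum_i \sum_j `|M i j| * r) => x xr.
have r0 : 0 <= r := le_trans (normr_ge0 x) xr.
rewrite /Num.norm /= mx_normrE; apply: bigmax_le => [|[i k] _ /=].
  by apply/sumr_ge0 => i _; apply/sumr_ge0 => j _; exact: mulr_ge0 (normr_ge0 _) r0.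
rewrite mxE (le_trans (ler_norm_sum _ _ _)) //.
apply: (@le_trans _ _ (\sum_j `|M i j| * r)).
  apply: ler_sum => j _; rewrite normrM ler_wpM2l //.
  exact: le_trans (entry_le_norm _ _ _) xr.
rewrite (bigD1 i) //= lerDl.
by apply/sumr_ge0 => i' _; apply/sumr_ge0 => j _; exact: mulr_ge0 (normr_ge0 _) r0.
Qed.

Lemma comp_gradient q d (M : 'M[R]_(q, d)) (phi : 'cV[R]_q -> R) g x :
  is_gradient phi g ->
  differentiable (fun y => phi (M *m y)) x /\
  ('d (fun y => phi (M *m y)) x : 'cV[R]_d -> R) =
     (fun v => ((M^T *m g (M *m x))^T *m v) 0 0).
Proof.
move=> hg; have [dphi ephi] := hg (M *m x).
have cM : continuous (mulmx M : 'cV[R]_d -> 'cV[R]_q).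
  by move=> y; apply: mulmx_continuous.
have dM : differentiable (mulmx M : 'cV[R]_d -> 'cV[R]_q) x.
  exact: linear_differentiable.
have -> : (fun y => phi (M *m y)) = phi \o (mulmx M) by [].
split; first exact: differentiable_comp.
rewrite diff_comp // diff_lin // ephi; apply/funext => v /=.
by rewrite trmx_mul trmxK mulmxA.
Qed.

Lemma diff_sum_fun (V : normedModType R) n (F dF : 'I_n -> V -> R) x :
  (forall i, differentiable (F i) x /\ ('d (F i) x : V -> R) = dF i) ->
  differentiable (\sum_i F i) x /\ ('d (\sum_i F i) x : V -> R) = \sum_i dF i.
Proof.
move=> H; apply: (big_ind2 (fun F dF => differentiable F x /\ ('d F x : V -> R) = dF)).
- split; first exact: (differentiable_cst 0).
  exact: (diff_cst 0).
- move=> F1 dF1 F2 dF2 [d1 e1] [d2 e2]; split; first exact: differentiableD.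
  by rewrite diffD // e1 e2.
- by move=> i _; exact: H.
Qed.

End Diff.

End Aux.
Import Aux.

Theorem mainTheorem8 (R : realType) (d s : nat) (q : 'I_s -> nat)
  (M : forall i : 'I_s, 'M[R]_(q i, d))
  (phi : forall i : 'I_s, 'cV[R]_(q i) -> R)
  (Li : forall i : 'I_s, 'M[R]_(q i))
  (Lsqrt : forall i : 'I_s, 'M[R]_(q i))
  (L : 'M[R]_d) :
  (forall i, spd (Li i)) ->
  (forall i, C1 (phi i)) ->
  (forall i, L_lipschitz_gradient (Li i) (phi i)) ->
  (forall i, spd (Lsqrt i) /\ Lsqrt i *m Lsqrt i = Li i) ->
  spd L ->
  \sum_(i < s) lambda_max (Lsqrt i *m M i *m invmx L *m (M i)^T *m Lsqrt i) = 1 ->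
  L_lipschitz_gradient L (fun x : 'cV[R]_d => \sum_(i < s) phi i (M i *m x)).
Proof.
move=> _ _ hLip hS hL hsum.
pose g := fun i => proj1_sig (cid (hLip i)).
have hg : forall i, is_gradient (phi i) (g i) /\
    forall x y, mxnorm (invmx (Li i)) (g i x - g i y) <= mxnorm (Li i) (x - y).
  by move=> i; exact: (proj2_sig (cid (hLip i))).
pose G := fun x : 'cV[R]_d => \sum_i (M i)^T *m g i (M i *m x).
exists G; split.
  move=> x.
  have eqf : (fun x : 'cV[R]_d => \sum_(i < s) phi i (M i *m x)) =
      \sum_i (fun x => phi i (M i *m x)) by rewrite fct_sumE.
  rewrite eqf.
  have [D E] := diff_sum_fun (fun i => comp_gradient (M i) x (proj1 (hg i))).
  split => //; rewrite E fct_sumE; apply/funext => v.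
  rewrite /G linear_sum /= mulmx_suml summxE; apply: eq_bigr => i _ //.
have [sL _] := hL.
have hL' := spd_inv hL; have [sL' _] := hL'.
move=> x y.
have -> : G x - G y = \sum_i (M i)^T *m (g i (M i *m x) - g i (M i *m y)).
  by rewrite /G -sumrB; apply: eq_bigr => i _; rewrite mulmxBr.
apply: (le_trans (mxnorm_sum _ sL' (spd_psd hL'))).
apply: (@le_trans _ _ (\sum_i lambda_max (Lsqrt i *m M i *m invmx L *m (M i)^T *m Lsqrt i) * mxnorm L (x - y))).
  apply: ler_sum => i _; have [hSi hSLi] := hS i.
  apply: term_bound => //.
  by rewrite mulmxBr hSLi; apply: (proj2 (hg i)).
by rewrite -mulr_suml hsum mul1r.
Qed.
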